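(* Let $k\le n\le m<\phi(k)$. Then the value in $U_q^+(\mathfrak{sp}_{2n})$ of the bracketed word $[y_k\,x_n\,x_{n+1}\cdots x_m]$, where $y_k=v[k,n-1]=[[\dots[x_k,x_{k+1}],\dots],x_{n-1}]$, does not depend on the arrangement of the (skew) brackets on the sequence $y_k,x_n,x_{n+1},\dots,x_m$.
   Context: Let $\mathbf{k}$ be a field, $G$ an abelian group, $n\ge2$, $X=\{x_1,\dots,x_n\}$, $g_i\in G$, characters $\chi^i:G\to\mathbf{k}^*$, $p_{ij}=\chi^i(g_j)$; for homogeneous $u,v$, $p(u,v)=\chi^u(g_v)$ (obtained by replacing $x_i$ by $g_i$, resp. $\chi^i$). $G\langle X\rangle$: skew group algebra with $x_ig=\chi^i(g)gx_i$; skew bracket $[u,v]=uv-p(u,v)vu$. Fix $q\in\mathbf{k}^*$, $q^3\ne1$, $q\ne-1$; assume $p_{ii}=q$ ($i<n$), $p_{nn}=q^2$, $p_{i,i-1}p_{i-1,i}=q^{-1}$ ($1<i<n$), $p_{n-1,n}p_{n,n-1}=q^{-2}$, $p_{ij}p_{ji}=1$ ($j>i+1$). $U_q^+(\mathfrak{sp}_{2n})$ is the quotient of $G\langle X\rangle$ by the ideal generated by $[x_i,[x_i,x_{i+1}]]$, $[[x_i,x_{i+1}],x_{i+1}]$ ($1\le i<n-1$), $[x_i,x_j]$ ($j>i+1$), $[[x_{n-1},x_n],x_n]$, $[x_{n-1},[x_{n-1},[x_{n-1},x_n]]]$. For $n<i<2n$, $x_i:=x_{2n-i}$; $\phi(i)=2n-i$.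 *)

(* Defs.v *)
From mathcomp Require Import all_boot all_order all_algebra.
Set Implicit Arguments. Unset Strict Implicit. Unset Printing Implicit Defensive.
Import GRing.Theory.
Local Open Scope ring_scope.

(* Letters x_1..x_n are encoded by natural numbers 1..n; a word is a sequence
   of letters.  A noncommutative polynomial of k<X> is represented by a finite
   formal sum of (coefficient, word) pairs; its actual value is the coefficient
   function [coef]. *)
Definition word := seq nat.

Section FreeAlg.
Variable K : fieldType.

Definition npoly := seq (K * word).

Definition coef (f : npoly) (w : word) : K :=
  \sum_(cw <- f) (if cw.2 == w then cw.1 else 0).

Definition padd (f g : npoly) : npoly := f ++ g.
Definition pscale (c : K) (f : npoly) : npoly := [seq (c * cw.1, cw.2) | cw <- f].
Definition pmul (f g : npoly) : npoly :=
  [seq (a.1 * b.1, a.2 ++ b.2) | a <- f, b <- g].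
Definition pX (i : nat) : npoly := [:: (1, [:: i])].

(* homogeneous element together with its degree (as the multiset/word of
   letters it is built from) *)
Definition hpoly := (npoly * word)%type.

(* p(u,v) = chi^u(g_v) for homogeneous u, v: bimultiplicative in the degrees *)
Definition pdeg (p : nat -> nat -> K) (u v : word) : K :=
  \prod_(a <- u) \prod_(b <- v) p a b.

Definition sbr (p : nat -> nat -> K) (u v : hpoly) : hpoly :=
  (padd (pmul u.1 v.1) (pscale (- pdeg p u.2 v.2) (pmul v.1 u.1)), u.2 ++ v.2).

Definition hx (i : nat) : hpoly := (pX i, [:: i]).

(* x_i for n < i < 2n is x_{2n-i} (phi(i) = 2n - i) *)
Definition letter (n i : nat) : nat := if (i <= n)%N then i else (2 * n - i)%N.

Definition vword (p : nat -> nat -> K) (k n : nat) : hpoly :=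
  foldl (sbr p) (hx k) [seq hx i | i <- iota k.+1 (n.-1 - k)].

(* bracketings: binary trees whose leaves are the factors *)
Inductive btree (A : Type) := BLeaf of A | BNode of btree A & btree A.
Arguments BLeaf {A}. Arguments BNode {A}.

Fixpoint bflat (A : Type) (t : btree A) : seq A :=
  match t with BLeaf a => [:: a] | BNode l r => bflat l ++ bflat r end.

Fixpoint beval (p : nat -> nat -> K) (t : btree hpoly) : hpoly :=
  match t with BLeaf a => a | BNode l r => sbr p (beval p l) (beval p r) end.

Definition leaves (p : nat -> nat -> K) (n k m : nat) : seq hpoly :=
  vword p k n :: [seq hx (letter n i) | i <- iota n (m.+1 - n)].

Definition rels (p : nat -> nat -> K) (n : nat) : seq npoly :=
  [seq (sbr p (hx i) (sbr p (hx i) (hx i.+1))).1 | i <- iota 1 (n - 2)] ++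
  [seq (sbr p (sbr p (hx i) (hx i.+1)) (hx i.+1)).1 | i <- iota 1 (n - 2)] ++
  [seq (sbr p (hx i) (hx j)).1 | i <- iota 1 n, j <- iota i.+2 (n - i.+1)] ++
  [:: (sbr p (sbr p (hx n.-1) (hx n)) (hx n)).1;
      (sbr p (hx n.-1) (sbr p (hx n.-1) (sbr p (hx n.-1) (hx n)))).1].

(* a generator term  c * a * r * b  of the two-sided ideal *)
Record igen := IGen { gc : K; ga : word; gr : npoly; gb : word }.

Definition igen_poly (t : igen) : npoly :=
  [seq (gc t * cw.1, ga t ++ cw.2 ++ gb t) | cw <- gr t].

Definition in_alph (n : nat) (w : word) : bool := all (fun a => (1 <= a <= n)%N) w.

Fixpoint InL (A : Type) (a : A) (s : seq A) : Prop :=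
  match s with [::] => False | b :: s' => b = a \/ InL a s' end.

(* f = g in U_q^+(sp_2n): f - g lies in the ideal of k<x_1..x_n> generated
   by the relations *)
Definition ucongr (p : nat -> nat -> K) (n : nat) (f g : npoly) : Prop :=
  exists s : seq igen,
    (forall t, InL t s -> [/\ gr t \in rels p n, in_alph n (ga t) & in_alph n (gb t)]) /\
    forall w, coef f w - coef g w = coef (flatten [seq igen_poly t | t <- s]) w.

End FreeAlg.
Arguments BLeaf {A}. Arguments BNode {A}.

Definition pmat (K : fieldType) (G : zmodType) (chi : nat -> G -> K) (g : nat -> G)
  (i j : nat) : K := chi i (g j).

(* Main.v *)
Require Import Defs.
From mathcomp Require Import all_boot all_order all_algebra.
From mathcomp Require Import ring zify.
From Stdlib Require Import FunctionalExtensionality.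
Set Implicit Arguments. Unset Strict Implicit. Unset Printing Implicit Defensive.
Import GRing.Theory.
Local Open Scope ring_scope.

Section Alg.
Variable K : fieldType.
Implicit Types (f g h : Defs.npoly K) (F G H : word -> K).

Definition fadd F G : word -> K := fun w => F w + G w.
Definition fscale (c : K) F : word -> K := fun w => c * F w.
Fixpoint splits (w : word) : seq (word * word) :=
  if w is a :: w' then ([::], a :: w') :: [seq (a :: x.1, x.2) | x <- splits w']
  else [:: ([::], [::])].
Definition fmul F G : word -> K := fun w => \sum_(x <- splits w) F x.1 * G x.2.
Definition C f : word -> K := fun w => coef f w.

Lemma fmul_nil F G : fmul F G [::] = F [::] * G [::].
Proof. by rewrite /fmul /= big_seq1. Qed.

Lemma fmul_cons F G a w :
  fmul F G (a :: w) = F [::] * G (a :: w) + fmul (fun x => F (a :: x)) G w.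
Proof. by rewrite /fmul /= big_cons big_map. Qed.

Lemma fmulDl F G H : fmul (fadd F G) H = fadd (fmul F H) (fmul G H).
Proof.
apply: functional_extensionality => w; rewrite /fmul /fadd -big_split /=.
by apply: eq_bigr => x _; rewrite mulrDl.
Qed.
Lemma fmulDr F G H : fmul H (fadd F G) = fadd (fmul H F) (fmul H G).
Proof.
apply: functional_extensionality => w; rewrite /fmul /fadd -big_split /=.
by apply: eq_bigr => x _; rewrite mulrDr.
Qed.
Lemma fmulZl c F G : fmul (fscale c F) G = fscale c (fmul F G).
Proof.
apply: functional_extensionality => w; rewrite /fmul /fscale mulr_sumr.
by apply: eq_bigr => x _; rewrite mulrA.
Qed.
Lemma fmulZr c F G : fmul F (fscale c G) = fscale c (fmul F G).
Proof.
apply: functional_extensionality => w; rewrite /fmul /fscale mulr_sumr.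
by apply: eq_bigr => x _; rewrite mulrCA.
Qed.

Lemma fmulA F G H : fmul F (fmul G H) = fmul (fmul F G) H.
Proof.
apply: functional_extensionality => w.
elim: w F => [|a w IH] F; first by rewrite !fmul_nil mulrA.
rewrite !fmul_cons fmul_nil.
have -> : (fun x => fmul F G (a :: x)) =
          fadd (fscale (F [::]) (fun x => G (a :: x))) (fmul (fun x => F (a :: x)) G).
  by apply: functional_extensionality => x; rewrite fmul_cons.
rewrite fmulDl fmulZl /fadd /fscale -IH; ring.
Qed.

Lemma splitsP w u v (c : K) :
  \sum_(x <- splits w) (if (u == x.1) && (v == x.2) then c else 0) =
  if u ++ v == w then c else 0.
Proof.
elim: w u => [|a w IH] u /=.
  by rewrite big_seq1 /=; case: u.
rewrite big_cons big_map /=.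
case: u => [|b u] /=.
  rewrite big1 ?addr0 //; move=> x _; by [].
rewrite add0r eqseq_cons.
have [<-|nab] := eqVneq b a.
  rewrite ?eqxx /= -(IH u).
  by apply: eq_bigr => x _; rewrite eqseq_cons eqxx.
rewrite /= big1 //; move=> x _; by rewrite eqseq_cons (negbTE nab).
Qed.

Lemma coef_cons (x : K * word) f w :
  coef (x :: f) w = (if x.2 == w then x.1 else 0) + coef f w.
Proof. by rewrite /coef big_cons. Qed.

Lemma C_pmul f g : C (pmul f g) = fmul (C f) (C g).
Proof.
apply: functional_extensionality => w.
rewrite /C /coef /fmul /pmul big_allpairs_dep /=.
transitivity (\sum_(x <- splits w) \sum_(a <- f) \sum_(b <- g)
   (if (a.2 == x.1) && (b.2 == x.2) then a.1 * b.1 else 0)); last first.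
  apply: eq_bigr => x _; rewrite mulr_suml.
  apply: (@eq_bigr _ _ _ _ _ xpredT) => a _.
  rewrite mulr_sumr; apply: (@eq_bigr _ _ _ _ _ xpredT) => b _.
  by case: (a.2 == x.1); case: (b.2 == x.2); rewrite ?mulr0 ?mul0r.
rewrite [RHS]exchange_big /=; apply: (@eq_bigr _ _ _ _ _ xpredT) => a _.
rewrite [RHS]exchange_big /=; apply: (@eq_bigr _ _ _ _ _ xpredT) => b _.
by rewrite splitsP.
Qed.

Lemma C_padd f g : C (padd f g) = fadd (C f) (C g).
Proof. by apply: functional_extensionality => w; rewrite /C /coef big_cat. Qed.

Lemma C_pscale c f : C (pscale c f) = fscale c (C f).
Proof.
apply: functional_extensionality => w; rewrite /C /coef /fscale big_map mulr_sumr.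
by apply: eq_bigr => x _; case: ifP; rewrite ?mulr0.
Qed.

End Alg.

Section Ideal.
Variable K : fieldType.
Variable p : nat -> nat -> K.
Variable n : nat.
Implicit Types (f g h : Defs.npoly K) (F G H : word -> K).

Definition valid (s : seq (igen K)) := forall t, InL t s ->
  [/\ gr t \in rels p n, in_alph n (ga t) & in_alph n (gb t)].
Definition gens (s : seq (igen K)) := flatten [seq igen_poly t | t <- s].
Definition Idf F := exists s, valid s /\ forall w, F w = coef (gens s) w.
Definition okp f := all (fun cw => in_alph n cw.2) f.

Lemma InL_cat (A : Type) (t : A) s1 s2 : InL t (s1 ++ s2) -> InL t s1 \/ InL t s2.
Proof. elim: s1 => [|x s1 IH] /=; first by right. by case=> [->|/IH [] ]; auto. Qed.

Lemma InL_map (A B : Type) (h : A -> B) (t : B) s :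
  InL t (map h s) -> exists t', InL t' s /\ t = h t'.
Proof.
elim: s => [|x s IH] //= [<-|/IH [t' [H1 H2]]]; first by exists x; auto.
by exists t'; auto.
Qed.

Lemma Iext F G : F = G -> Idf F -> Idf G.
Proof. by move=> ->. Qed.

Lemma I0 : Idf (fun _ => 0).
Proof. by exists [::]; split=> // w; rewrite /gens /= /coef big_nil. Qed.

Lemma gens_cat s1 s2 : gens (s1 ++ s2) = gens s1 ++ gens s2.
Proof. by rewrite /gens map_cat flatten_cat. Qed.

Lemma Iadd F G : Idf F -> Idf G -> Idf (fadd F G).
Proof.
move=> [s1 [v1 e1]] [s2 [v2 e2]]; exists (s1 ++ s2); split.
  by move=> t H; case: (InL_cat H) => [/v1|/v2].
by move=> w; rewrite gens_cat /coef big_cat /fadd e1 e2.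
Qed.

Lemma Iscale c F : Idf F -> Idf (fscale c F).
Proof.
move=> [s [v e]].
exists [seq IGen (c * gc t) (ga t) (gr t) (gb t) | t <- s]; split.
  by move=> t Ht; case: (InL_map Ht) => [t' [/v H ->]].
move=> w; rewrite /fscale e.
have -> : gens [seq IGen (c * gc t) (ga t) (gr t) (gb t) | t <- s] = pscale c (gens s).
  elim: s {v e} => [|t s IH] //=.
  rewrite /gens /= -/(gens _) -/(gens _) IH /pscale map_cat; congr (_ ++ _).
  by rewrite /igen_poly /= -map_comp; apply: eq_map => x /=; rewrite mulrA.
by rewrite (_ : coef (pscale c (gens s)) w = C (pscale c (gens s)) w) // C_pscale.
Qed.

Lemma C_nil : C ([::] : Defs.npoly K) = fun _ => 0.
Proof. by apply: functional_extensionality => w; rewrite /C /coef big_nil. Qed.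

Lemma fmul0l F : fmul (fun _ => 0) F = fun _ => 0.
Proof.
apply: functional_extensionality => w; rewrite /fmul big1 // => x _; exact: mul0r.
Qed.
Lemma fmul0r F : fmul F (fun _ => 0) = fun _ => 0.
Proof.
apply: functional_extensionality => w; rewrite /fmul big1 // => x _; exact: mulr0.
Qed.

Lemma C_cons (a : K * word) f :
  C (a :: f) = fadd (fscale a.1 (C [:: (1, a.2)])) (C f).
Proof.
apply: functional_extensionality => w.
by rewrite /fadd /fscale /C !coef_cons /coef big_nil addr0; case: ifP; rewrite ?mulr1 ?mulr0.
Qed.

Lemma Imono_l u F : in_alph n u -> Idf F -> Idf (fmul (C [:: (1, u)]) F).
Proof.
move=> hu [s [v e]].
have -> : F = C (gens s) by apply: functional_extensionality.
exists [seq IGen (gc t) (u ++ ga t) (gr t) (gb t) | t <- s]; split.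
  move=> t Ht; case: (InL_map Ht) => [t' [/v [H1 H2 H3] ->]]; split=> //=.
  by move: hu H2; rewrite /in_alph all_cat => -> ->.
move=> w; rewrite -C_pmul /C; congr coef.
rewrite /pmul allpairs_cons /= cats0.
elim: s {v e} => [|t s IH] //=.
rewrite /gens /= -/(gens _) -/(gens _) map_cat IH; congr (_ ++ _).
by rewrite /igen_poly /= -map_comp; apply: eq_map => x /=; rewrite mul1r catA.
Qed.

Lemma Imono_r u F : in_alph n u -> Idf F -> Idf (fmul F (C [:: (1, u)])).
Proof.
move=> hu [s [v e]].
have -> : F = C (gens s) by apply: functional_extensionality.
exists [seq IGen (gc t) (ga t) (gr t) (gb t ++ u) | t <- s]; split.
  move=> t Ht; case: (InL_map Ht) => [t' [/v [H1 H2 H3] ->]]; split=> //=.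
  by move: hu H3; rewrite /in_alph all_cat => -> ->.
move=> w; rewrite -C_pmul /C; congr coef.
rewrite /pmul /= flatten_map1.
elim: s {v e} => [|t s IH] //=.
rewrite /gens /= -/(gens _) -/(gens _) map_cat IH; congr (_ ++ _).
rewrite /igen_poly /= -map_comp /=.
by apply: eq_map => x /=; rewrite mulr1 -!catA.
Qed.

Lemma Imul_l f F : okp f -> Idf F -> Idf (fmul (C f) F).
Proof.
move=> hf hF; elim: f hf => [|a f IH] /=.
  by rewrite C_nil fmul0l => _; exact: I0.
move=> /andP [ha hf]; rewrite C_cons fmulDl fmulZl.
apply: Iadd; last exact: IH.
by apply: Iscale; apply: Imono_l.
Qed.

Lemma Imul_r f F : okp f -> Idf F -> Idf (fmul F (C f)).
Proof.
move=> hf hF; elim: f hf => [|a f IH] /=.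
  by rewrite C_nil fmul0r => _; exact: I0.
move=> /andP [ha hf]; rewrite C_cons fmulDr fmulZr.
apply: Iadd; last exact: IH.
by apply: Iscale; apply: Imono_r.
Qed.

Lemma Irel r : r \in rels p n -> Idf (C r).
Proof.
move=> hr; exists [:: IGen 1 [::] r [::]]; split.
  by move=> t /= [<-|//]; split.
move=> w; rewrite /gens /= cats0 /igen_poly /=; congr coef.
rewrite -[LHS]map_id; apply: eq_map => -[c x] /=; by rewrite mul1r cats0.
Qed.

End Ideal.

Section Br.
Variable K : fieldType.
Variable p : nat -> nat -> K.
Variable n : nat.
Implicit Types (u v w a b c : hpoly K) (f g h : Defs.npoly K).
Local Notation sb := (sbr p).
Local Notation Id := (Idf p n).

Definition okh u := okp n u.1.
Definition Z u v := Id (C (sb u v).1).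
Definition E (f g : Defs.npoly K) := Id (fadd (C f) (fscale (-1) (C g))).

Lemma sbr2 u v : (sb u v).2 = u.2 ++ v.2.
Proof. by []. Qed.

Lemma C_sbr u v : C (sb u v).1 =
  fadd (fmul (C u.1) (C v.1)) (fscale (- pdeg p u.2 v.2) (fmul (C v.1) (C u.1))).
Proof. by rewrite /sbr /= C_padd C_pscale !C_pmul. Qed.

Lemma pdegDl (x y z : word) : pdeg p (x ++ y) z = pdeg p x z * pdeg p y z.
Proof. by rewrite /pdeg big_cat. Qed.
Lemma pdegDr (x y z : word) : pdeg p x (y ++ z) = pdeg p x y * pdeg p x z.
Proof.
rewrite /pdeg -big_split /=; apply: eq_bigr => i _; by rewrite big_cat.
Qed.

Lemma okp_cat f g : okp n f -> okp n g -> okp n (f ++ g).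
Proof. by rewrite /okp all_cat => -> ->. Qed.
Lemma okp_scale (c : K) f : okp n f -> okp n (pscale c f).
Proof. by rewrite /okp /pscale all_map. Qed.
Lemma okp_mul f g : okp n f -> okp n g -> okp n (pmul f g).
Proof.
rewrite /okp /pmul => hf hg; apply/allP => x /allpairsP [[y z] [hy hz ->]] /=.
move/allP: hf => /(_ _ hy); move/allP: hg => /(_ _ hz).
by rewrite /in_alph all_cat => -> ->.
Qed.
Lemma okh_sbr u v : okh u -> okh v -> okh (sb u v).
Proof.
rewrite /okh /sbr /= => hu hv; apply: okp_cat; first exact: okp_mul.
by apply: okp_scale; apply: okp_mul.
Qed.

Lemma Isbr_l u v : Id (C u.1) -> okh v -> Id (C (sb u v).1).
Proof.
move=> hu hv; rewrite C_sbr; apply: Iadd; first exact: Imul_r.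
by apply: Iscale; apply: Imul_l.
Qed.
Lemma Isbr_r u v : okh u -> Id (C v.1) -> Id (C (sb u v).1).
Proof.
move=> hu hv; rewrite C_sbr; apply: Iadd; first exact: Imul_l.
by apply: Iscale; apply: Imul_r.
Qed.

Ltac fnorm := rewrite ?C_sbr ?sbr2 ?pdegDl ?pdegDr; do 4 rewrite ?(fmulDl, fmulDr, fmulZl, fmulZr); rewrite ?fmulA;
  apply: functional_extensionality => ?; rewrite /fadd /fscale /=.

Lemma Jid u v w : C (sb (sb u v) w).1 = fadd (C (sb u (sb v w)).1)
  (fadd (fscale (pdeg p v.2 w.2) (fmul (C (sb u w).1) (C v.1)))
        (fscale (- pdeg p u.2 v.2) (fmul (C v.1) (C (sb u w).1)))).
Proof. fnorm; ring. Qed.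

Lemma E_refl f : E f f.
Proof.
apply: Iext (I0 p n); apply: functional_extensionality => x; rewrite /fadd /fscale; ring.
Qed.
Lemma E_sym f g : E f g -> E g f.
Proof.
move=> /(Iscale (-1)); apply: Iext; apply: functional_extensionality => x.
rewrite /fadd /fscale; ring.
Qed.
Lemma E_trans f g h : E f g -> E g h -> E f h.
Proof.
move=> H1 H2; move: (Iadd H1 H2); apply: Iext; apply: functional_extensionality => x.
rewrite /fadd /fscale; ring.
Qed.

Lemma E_ofId f g (F : word -> K) : fadd (C f) (fscale (-1) (C g)) = F -> Id F -> E f g.
Proof. by rewrite /E => ->. Qed.

Lemma Z_J u v w : Z u w -> okh v -> E (sb (sb u v) w).1 (sb u (sb v w)).1.
Proof.
move=> hz hv; apply: (E_ofId (F := fadd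
  (fscale (pdeg p v.2 w.2) (fmul (C (sb u w).1) (C v.1)))
  (fscale (- pdeg p u.2 v.2) (fmul (C v.1) (C (sb u w).1))))).
  rewrite Jid; apply: functional_extensionality => x; rewrite /fadd /fscale; ring.
apply: Iadd; apply: Iscale; [exact: Imul_r | exact: Imul_l].
Qed.

Lemma Zsbr_l a b c : Z a c -> Z b c -> okh a -> okh b -> Z (sb a b) c.
Proof.
move=> hac hbc ha hb; rewrite /Z Jid; apply: Iadd; first exact: Isbr_r.
apply: Iadd; apply: Iscale; [exact: Imul_r | exact: Imul_l].
Qed.

Lemma EZ u u' v : E u.1 u'.1 -> u.2 = u'.2 -> okh u -> okh u' -> okh v -> Z u' v -> Z u v.
Proof.
move=> hE hd hu hu' hv hz.
set D := fadd (C u.1) (fscale (-1) (C u'.1)).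
rewrite /Z.
have -> : C (sb u v).1 = fadd (C (sb u' v).1)
   (fadd (fmul D (C v.1)) (fscale (- pdeg p u.2 v.2) (fmul (C v.1) D))).
  rewrite /D; fnorm; rewrite hd; ring.
apply: Iadd => //; apply: Iadd; last apply: Iscale; [exact: Imul_r | exact: Imul_l].
Qed.

Lemma E_sbr u u' v v' : E u.1 u'.1 -> E v.1 v'.1 -> u.2 = u'.2 -> v.2 = v'.2 ->
  okh u -> okh u' -> okh v -> okh v' -> E (sb u v).1 (sb u' v').1.
Proof.
move=> hu hv du dv ou ou' ov ov'.
set Du := fadd (C u.1) (fscale (-1) (C u'.1)).
set Dv := fadd (C v.1) (fscale (-1) (C v'.1)).
apply: (E_ofId (F := fadd (fadd (fmul Du (C v.1)) (fmul (C u'.1) Dv))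
  (fscale (- pdeg p u.2 v.2) (fadd (fmul Dv (C u.1)) (fmul (C v'.1) Du))))).
  rewrite /Du /Dv; fnorm; rewrite -du -dv; ring.
apply: Iadd; [apply: Iadd | apply: Iscale; apply: Iadd].
- exact: Imul_r.
- exact: Imul_l.
- exact: Imul_r.
- exact: Imul_l.
Qed.

Lemma Serre4 (q : K) a b c : q != 0 -> 1 + q != 0 ->
  pdeg p a.2 b.2 != 0 -> pdeg p b.2 c.2 != 0 -> pdeg p a.2 c.2 != 0 ->
  pdeg p b.2 a.2 = q^-1 / pdeg p a.2 b.2 -> pdeg p b.2 b.2 = q ->
  pdeg p c.2 b.2 = q^-1 / pdeg p b.2 c.2 -> pdeg p c.2 a.2 = (pdeg p a.2 c.2)^-1 ->
  okh a -> okh b -> okh c -> Z a c -> Z (sb a b) b -> Z b (sb b c) ->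
  Z (sb (sb a b) c) b.
Proof.
move=> q0 q1 s0 u0 w0 hba hbb hcb hca oa ob oc zac zabb zbbc.
set s := pdeg p a.2 b.2; set uu := pdeg p b.2 c.2; set ww := pdeg p a.2 c.2.
rewrite /Z.
have -> : C (sb (sb (sb a b) c) b).1 =
  fadd (fscale (q * uu / (1 + q)) (fmul (fmul (C (sb a c).1) (C b.1)) (C b.1)))
  (fadd (fscale (- s) (fmul (fmul (C b.1) (C (sb a c).1)) (C b.1)))
  (fadd (fscale (s * s / (uu * (1 + q))) (fmul (C b.1) (fmul (C b.1) (C (sb a c).1))))
  (fadd (fscale (1 / (uu * (1 + q))) (fmul (C (sb (sb a b) b).1) (C c.1)))
  (fadd (fscale (- uu * ww / (1 + q)) (fmul (C c.1) (C (sb (sb a b) b).1)))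
  (fadd (fscale (s * s * ww / (uu * (1 + q))) (fmul (C (sb b (sb b c)).1) (C a.1)))
        (fscale (- 1 / (uu * (1 + q))) (fmul (C a.1) (C (sb b (sb b c)).1)))))))).
  fnorm; rewrite ?hba ?hbb ?hcb ?hca /s /uu /ww; field.
  by apply/and3P; split.
apply: Iadd; first by apply: Iscale; apply: Imul_r => //; apply: Imul_r.
apply: Iadd; first by apply: Iscale; apply: Imul_r => //; apply: Imul_l.
apply: Iadd; first by apply: Iscale; apply: Imul_l => //; apply: Imul_l.
apply: Iadd; first by apply: Iscale; apply: Imul_r.
apply: Iadd; first by apply: Iscale; apply: Imul_l.
by apply: Iadd; apply: Iscale; [apply: Imul_r | apply: Imul_l].
Qed.

End Br.

Section Tree.
Variable K : fieldType.
Variable p : nat -> nat -> K.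
Variable n : nat.
Local Notation sb := (sbr p).
Local Notation okh := (okh n).
Local Notation Z := (Z p n).
Local Notation E := (E p n).

Definition x0 : hpoly K := ([::], [::]).
Definition LN (a : hpoly K) s := foldl sb a s.
Definition good (s : seq (hpoly K)) := forall i j, (i.+2 <= j)%N -> (j < size s)%N ->
  Z (nth x0 s i) (nth x0 s j).

Lemma LN_deg a s : (LN a s).2 = a.2 ++ flatten (map snd s).
Proof.
elim: s a => [|b s IH] a /=; first by rewrite cats0.
by rewrite /LN /= -/(LN _ _) IH /= catA.
Qed.

Lemma okh_LN a s : okh a -> all okh s -> okh (LN a s).
Proof.
elim: s a => [|b s IH] a //= ha /andP [hb hs].
by apply: IH => //; apply: okh_sbr.
Qed.

Lemma beval_deg (t : btree (hpoly K)) : (beval p t).2 = flatten (map snd (bflat t)).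
Proof.
elim: t => [a|l IHl r IHr] /=; first by rewrite cats0.
by rewrite map_cat flatten_cat IHl IHr.
Qed.

Lemma okh_beval (t : btree (hpoly K)) : all okh (bflat t) -> okh (beval p t).
Proof.
elim: t => [a|l IHl r IHr] /=; first by rewrite andbT.
rewrite all_cat => /andP [hl hr]; apply: okh_sbr; [exact: IHl | exact: IHr].
Qed.

Lemma bflat_cons (t : btree (hpoly K)) : exists a s, bflat t = a :: s.
Proof.
elim: t => [a|l IHl r _] /=; first by exists a, [::].
by have [a [s ->]] := IHl; exists a, (s ++ bflat r).
Qed.

Lemma good_catl s t : good (s ++ t) -> good s.
Proof.
move=> h i j hij hj; have hi : (i < size s)%N by apply: leq_ltn_trans hj; apply: leq_trans hij; rewrite ltnW.
have := h i j hij; rewrite size_cat !nth_cat hi hj; apply.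
by apply: leq_trans hj _; rewrite leq_addr.
Qed.

Lemma good_catr s t : good (s ++ t) -> good t.
Proof.
move=> h i j hij hj.
have H := h (size s + i)%N (size s + j)%N.
rewrite !nth_cat !ltnNge !leq_addr /= !addKn in H; apply: H.
  lia.
rewrite size_cat; lia.
Qed.

Lemma Zfold s a c : Z a c -> (forall i, (i < size s)%N -> Z (nth x0 s i) c) ->
  okh a -> all okh s -> Z (LN a s) c.
Proof.
elim: s a => [|b s IH] a //= hac hs ha /andP [hb hss].
apply: IH => //.
- apply: Zsbr_l => //; exact: (hs 0%N).
- by move=> i hi; exact: (hs i.+1).
- exact: okh_sbr.
Qed.

Lemma join a1 s1 a2 s2 : good (a1 :: s1 ++ a2 :: s2) -> all okh (a1 :: s1 ++ a2 :: s2) ->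
  E (sb (LN a1 s1) (LN a2 s2)).1 (LN a1 (s1 ++ a2 :: s2)).1.
Proof.
elim/last_ind: s2 => [|s2 b IH] hg ho.
  by rewrite /LN foldl_cat /=; apply: E_refl.
have eL : a1 :: s1 ++ a2 :: rcons s2 b = rcons (a1 :: s1 ++ a2 :: s2) b.
  by rewrite -rcons_cons -rcons_cat.
have hg' : good (a1 :: s1 ++ a2 :: s2).
  by apply: (@good_catl _ [:: b]); rewrite cats1 -eL.
have ho' : all okh (a1 :: s1 ++ a2 :: s2).
  by move: ho; rewrite eL -cats1 all_cat => /andP [].
have hb : okh b by move: ho; rewrite eL -cats1 all_cat /= => /and3P [].
have hs1 : all okh s1 by move: ho' => /= /andP [_]; rewrite all_cat => /andP [].
have ha1 : okh a1 by move: ho' => /= /andP [].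
have hs2 : all okh (a2 :: s2) by move: ho' => /= /andP [_]; rewrite all_cat => /andP [].
have hX : okh (LN a1 s1) by apply: okh_LN.
have hY : okh (LN a2 s2) by move: hs2 => /= /andP [? ?]; apply: okh_LN.
have e1 : LN a2 (rcons s2 b) = sb (LN a2 s2) b by rewrite /LN foldl_rcons.
have e2 : LN a1 (s1 ++ a2 :: rcons s2 b) = sb (LN a1 (s1 ++ a2 :: s2)) b.
  by rewrite /LN -rcons_cons -rcons_cat foldl_rcons.
rewrite e1 e2.
set X := LN a1 s1; set Y := LN a2 s2.
have hZ : Z X b.
  set L := a1 :: s1 ++ a2 :: rcons s2 b.
  have hsz : size L = (size s1 + size s2 + 3)%N.
    by rewrite /L /= size_cat /= size_rcons; lia.
  have hbL : nth x0 L (size s1 + size s2 + 2)%N = b.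
    rewrite /L eL nth_rcons /= size_cat /= ifF; last by lia.
    by rewrite ifT //; apply/eqP; lia.
  apply: Zfold => //.
    have H := hg 0%N (size s1 + size s2 + 2)%N; rewrite -/L hbL in H.
    by apply: H; move: hsz; rewrite /L /=; lia.
  move=> i hi; have H := hg i.+1 (size s1 + size s2 + 2)%N.
  rewrite -/L hbL /L /= nth_cat hi in H.
  by apply: H; move: hsz; rewrite /L /=; lia.
apply: (@E_trans _ _ _ _ (sb (sb X Y) b).1).
  apply: E_sym; apply: Z_J => //.
apply: E_sbr => //.
- exact: IH.
- exact: E_refl.
- by rewrite /= /X /Y !LN_deg /= map_cat flatten_cat /= !catA.
- exact: okh_sbr.
- by apply: okh_LN => //; move: ho' => /andP [].
Qed.

Lemma tree_LN (t : btree (hpoly K)) : good (bflat t) -> all okh (bflat t) ->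
  E (beval p t).1 (LN (head x0 (bflat t)) (behead (bflat t))).1.
Proof.
elim: t => [a|l IHl r IHr] /=; first by move=> _ _; apply: E_refl.
have [a1 [s1 el]] := bflat_cons l; have [a2 [s2 er]] := bflat_cons r.
rewrite el er => hg ho.
have hgl : good (a1 :: s1) by apply: (@good_catl _ (a2 :: s2)).
have hgr : good (a2 :: s2) by apply: (@good_catr (a1 :: s1)).
move: ho; rewrite all_cat => /andP [hol hor].
move: IHl IHr; rewrite el er /= => /(_ hgl hol) IHl /(_ hgr hor) IHr.
have ho : all okh (a1 :: s1 ++ a2 :: s2) by rewrite -cat_cons all_cat hol hor.
apply: E_trans (join hg ho).
apply: E_sbr => //.
- by rewrite beval_deg LN_deg el.
- by rewrite beval_deg LN_deg er.
- by apply: okh_beval; rewrite el.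
- by move: hol => /= /andP [? ?]; apply: okh_LN.
- by apply: okh_beval; rewrite er.
- by move: hor => /= /andP [? ?]; apply: okh_LN.
Qed.

Lemma bracket_indep (t1 t2 : btree (hpoly K)) (L : seq (hpoly K)) :
  bflat t1 = L -> bflat t2 = L -> good L -> all okh L ->
  E (beval p t1).1 (beval p t2).1.
Proof.
move=> h1 h2 hg ho.
have e1 := tree_LN (t:=t1); have e2 := tree_LN (t:=t2).
rewrite h1 in e1; rewrite h2 in e2.
exact: E_trans (e1 hg ho) (E_sym (e2 hg ho)).
Qed.

End Tree.

Section Concrete.
Variable K : fieldType.
Variable p : nat -> nat -> K.
Variable n : nat.
Variable q : K.
Hypothesis hq0 : q != 0.
Hypothesis hq1 : 1 + q != 0.
Hypothesis hpii : forall i, (1 <= i < n)%N -> p i i = q.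
Hypothesis hpadj : forall i, (1 < i < n)%N -> p i i.-1 * p i.-1 i = q^-1.
Hypothesis hpfar : forall i j, (1 <= i)%N -> (i.+1 < j <= n)%N -> p i j * p j i = 1.
Local Notation sb := (sbr p).
Local Notation okh := (okh n).
Local Notation Z := (Z p n).
Local Notation E := (E p n).
Local Notation hx := (@hx K).

Definition U k m := foldl sb (hx k) [seq hx i | i <- iota k.+1 (m - k)].

Lemma pdeg11 i j : pdeg p [:: i] [:: j] = p i j.
Proof. by rewrite /pdeg !big_seq1. Qed.

Lemma okhx i : (1 <= i <= n)%N -> okh (hx i).
Proof. by rewrite /okh /okp /= /in_alph /= andbT => ->. Qed.

Lemma okU k m : (1 <= k)%N -> (k <= n)%N -> (m <= n)%N -> okh (U k m).
Proof.
move=> hk hkn hm; apply: okh_LN; first by apply: okhx; rewrite hk.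
rewrite all_map; apply/allP => i; rewrite mem_iota => /andP [h1 h2] /=.
by apply: okhx; apply/andP; split; lia.
Qed.

Lemma U_S k m : (k <= m)%N -> U k m.+1 = sb (U k m) (hx m.+1).
Proof.
move=> hkm; rewrite /U subSn // -[(m - k).+1]addn1 iotaD map_cat foldl_cat /=.
by congr (sb _ (hx _)); lia.
Qed.

Lemma U_deg k m : (k <= m)%N -> (U k m).2 = iota k (m.+1 - k).
Proof.
move=> hkm; rewrite /U -/(LN _ _ _) LN_deg /= -map_comp flatten_map1 map_id.
by rewrite subSn.
Qed.

Lemma U_k k : U k k = hx k.
Proof. by rewrite /U subnn. Qed.

Lemma pdeg_pair s j : pdeg p s [:: j] * pdeg p [:: j] s = \prod_(i <- s) (p i j * p j i).
Proof.
rewrite /pdeg big_seq1 big_split /=; congr (_ * _).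
by apply: eq_bigr => i _; rewrite big_seq1.
Qed.

Lemma pdeg_far s j : (forall i, i \in s -> (1 <= i)%N /\ (i.+1 < j <= n)%N) ->
  pdeg p s [:: j] * pdeg p [:: j] s = 1.
Proof.
move=> h; rewrite pdeg_pair big1_seq // => i /andP [_ /h [h1 h2]]; exact: hpfar.
Qed.

Lemma prod_ne0 (x y z : K) : x * y = z -> z != 0 -> x != 0.
Proof. by move=> <-; rewrite mulf_eq0 negb_or => /andP []. Qed.
Lemma prod_div (x y z : K) : x * y = z -> z != 0 -> y = z / x.
Proof.
move=> e hz; have hx : x != 0 by apply: prod_ne0 e hz.
by rewrite -e; field.
Qed.

Lemma rel_far i j : (1 <= i)%N -> (i.+1 < j <= n)%N -> (sb (hx i) (hx j)).1 \in rels p n.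
Proof.
move=> hi hj; rewrite /rels !mem_cat; apply/orP; right; apply/orP; right.
apply/orP; left; apply/allpairsPdep; exists i, j; split => //.
  by rewrite mem_iota; lia.
by rewrite mem_iota; lia.
Qed.

Lemma rel_A1 i : (1 <= i)%N -> (i.+1 < n)%N ->
  (sb (hx i) (sb (hx i) (hx i.+1))).1 \in rels p n.
Proof.
move=> hi hn; rewrite /rels !mem_cat; apply/orP; left.
by apply: (map_f (fun i => (sb (hx i) (sb (hx i) (hx i.+1))).1)); rewrite mem_iota; lia.
Qed.

Lemma rel_A2 i : (1 <= i)%N -> (i.+1 < n)%N ->
  (sb (sb (hx i) (hx i.+1)) (hx i.+1)).1 \in rels p n.
Proof.
move=> hi hn; rewrite /rels !mem_cat; apply/orP; right; apply/orP; left.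
by apply: (map_f (fun i => (sb (sb (hx i) (hx i.+1)) (hx i.+1)).1)); rewrite mem_iota; lia.
Qed.

Lemma Z_far_up i j : (1 <= i)%N -> (i.+1 < j <= n)%N -> Z (hx i) (hx j).
Proof. by move=> hi hj; apply: Irel; apply: rel_far. Qed.

Lemma Z_far_down i j : (1 <= i)%N -> (i.+1 < j <= n)%N -> Z (hx j) (hx i).
Proof.
move=> hi hj; rewrite /Z.
have -> : C (sb (hx j) (hx i)).1 = fscale (- p j i) (C (sb (hx i) (hx j)).1).
  rewrite !C_sbr /= !pdeg11.
  apply: functional_extensionality => x; rewrite /fadd /fscale /=.
  have e := hpfar hi hj.
  have hij : p i j != 0 by apply: prod_ne0 e (oner_neq0 _).
  by rewrite (prod_div e (oner_neq0 _)); field.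
by apply: Iscale; apply: Irel; apply: rel_far.
Qed.


Lemma Zfar_U k i j : (1 <= k <= i)%N -> (i.+1 < j <= n)%N -> Z (U k i) (hx j).
Proof.
move=> /andP [hk hki] hj; apply: Zfold.
- by apply: Z_far_up => //; lia.
- move=> t; rewrite size_map size_iota => ht.
  rewrite (nth_map 0%N) ?size_iota // nth_iota //.
  by apply: Z_far_up; lia.
- by apply: okhx; lia.
- rewrite all_map; apply/allP => t; rewrite mem_iota => /andP [h1 h2] /=.
  by apply: okhx; apply/andP; split; lia.
Qed.

Lemma CA k m : (1 <= k)%N -> (k <= m)%N -> (m < n)%N ->
  forall j, (k < j <= m)%N -> Z (U k m) (hx j).
Proof.
move=> hk; elim: m => [|m IH] hkm hmn j hj; first lia.
have hkm' : (k <= m)%N by lia.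
rewrite U_S //.
have oc : okh (hx m.+1) by apply: okhx; lia.
have [hjm|hjm|ejm] := ltngtP j m.
- apply: Zsbr_l.
  + by apply: IH => //; lia.
  + by apply: Z_far_down; lia.
  + by apply: okU; lia.
  + exact: oc.
- have -> : j = m.+1 by lia.
  have [ekm|hkm2] := eqVneq k m.
    rewrite ekm U_k; apply: Irel; apply: rel_A2; lia.
  have hkm3 : (k <= m.-1)%N by lia.
  rewrite -[in U k m](prednK (_ : (0 < m)%N)); last by lia.
  rewrite U_S // prednK; last by lia.
  set A := U k m.-1.
  have oA : okh A by apply: okU; lia.
  have ob : okh (hx m) by apply: okhx; lia.
  have zAc : Z A (hx m.+1) by apply: Zfar_U; lia.
  apply: (EZ (u' := sb A (sb (hx m) (hx m.+1)))).
  + exact: Z_J.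
  + by rewrite /= -catA.
  + by apply: okh_sbr => //; apply: okh_sbr.
  + by apply: okh_sbr => //; apply: okh_sbr.
  + exact: oc.
  + apply: Zsbr_l => //.
    * by apply: Irel; apply: rel_A2; lia.
    * exact: okh_sbr.
- subst j.
  have hkm3 : (k <= m.-1)%N by lia.
  have em : m.-1.+1 = m by lia.
  have eU : U k m = sb (U k m.-1) (hx m) by rewrite -{1}em U_S // em.
  have IHm : Z (U k m) (hx m) by apply: IH => //; lia.
  rewrite eU in IHm *.
  set A := U k m.-1.
  have oA : okh A by apply: okU; lia.
  have ob : okh (hx m) by apply: okhx; lia.
  have zAc : Z A (hx m.+1) by apply: Zfar_U; lia.
  have dA : A.2 = iota k (m - k) by rewrite /A U_deg // em.
  have eAB : pdeg p A.2 (hx m).2 * pdeg p (hx m).2 A.2 = q^-1.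
    rewrite dA /= pdeg_pair (_ : (m - k) = (m.-1 - k) + 1)%N; last by lia.
    rewrite iotaD big_cat /= big_seq1 big1_seq ?mul1r.
      rewrite (_ : (k + (m.-1 - k)) = m.-1)%N; last by lia.
      by rewrite mulrC; have := hpadj (i := m); apply; lia.
    move=> i /andP [_]; rewrite mem_iota => hi; apply: hpfar; lia.
  have eAC : pdeg p A.2 (hx m.+1).2 * pdeg p (hx m.+1).2 A.2 = 1.
    rewrite dA; apply: pdeg_far => i; rewrite mem_iota => hi; lia.
  have eBC : pdeg p (hx m).2 (hx m.+1).2 * pdeg p (hx m.+1).2 (hx m).2 = q^-1.
    by rewrite /= !pdeg11 mulrC (hpadj (i := m.+1)) //; lia.
  have qi0 : q^-1 != 0 by rewrite invr_eq0.
  apply: (Serre4 (q := q)) => //.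
  + exact: prod_ne0 eAB qi0.
  + exact: prod_ne0 eBC qi0.
  + exact: prod_ne0 eAC (oner_neq0 _).
  + exact: prod_div eAB qi0.
  + by rewrite /= pdeg11 hpii //; lia.
  + exact: prod_div eBC qi0.
  + by rewrite (prod_div eAC (oner_neq0 _)) div1r.
  + by apply: Irel; apply: rel_A1; lia.
Qed.

Lemma letter_n t : letter n (n + t) = (n - t)%N.
Proof. rewrite /letter; case: ifP => h; lia. Qed.

Lemma leaves_ok_good k M : (1 <= k)%N -> (n <= M)%N -> (M < 2 * n - k)%N ->
  good p n (leaves p n k M) /\ all okh (leaves p n k M).
Proof.
move=> hk hnM hM.
have hkn : (k < n)%N by lia.
have nthS : forall t, (t < M.+1 - n)%N ->
    nth (x0 K) (leaves p n k M) t.+1 = hx (n - t).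
  by move=> t ht; rewrite /leaves /= (nth_map 0%N) ?size_iota // nth_iota // letter_n.
have n0 : nth (x0 K) (leaves p n k M) 0 = U k n.-1 by [].
have sz : size (leaves p n k M) = (M.+1 - n).+1 by rewrite /leaves /= size_map size_iota.
split.
  move=> i j hij hj; rewrite sz in hj.
  case: j hij hj => [|t] hij hj; first lia.
  rewrite nthS; last lia.
  case: i hij => [|s] hij.
    rewrite n0; apply: CA => //; lia.
  rewrite nthS; last lia.
  by apply: Z_far_down; lia.
rewrite /leaves /= all_map; apply/andP; split.
  by rewrite -/(U k n.-1); apply: okU; lia.
apply/allP => i; rewrite mem_iota => hi /=.
apply: okhx; rewrite /letter; case: ifP => h; lia.
Qed.

End Concrete.

Theorem lemma3p4 (K : fieldType) (G : zmodType) (n : nat) (g : nat -> G)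
  (chi : nat -> G -> K) (q : K)
  (hn : (2 <= n)%N)
  (hchiM : forall i, (1 <= i <= n)%N -> forall a b : G, chi i (a + b) = chi i a * chi i b)
  (hchi0 : forall i, (1 <= i <= n)%N -> forall a : G, chi i a != 0)
  (hq0 : q != 0) (hq3 : q ^+ 3 != 1) (hq1 : q != -1)
  (hpii : forall i, (1 <= i < n)%N -> pmat chi g i i = q)
  (hpnn : pmat chi g n n = q ^+ 2)
  (hpadj : forall i, (1 < i < n)%N -> pmat chi g i i.-1 * pmat chi g i.-1 i = q^-1)
  (hplast : pmat chi g n.-1 n * pmat chi g n n.-1 = q ^- 2)
  (hpfar : forall i j, (1 <= i)%N -> (i.+1 < j <= n)%N -> pmat chi g i j * pmat chi g j i = 1)
  (k m : nat) (hk : (1 <= k <= n)%N) (hnm : (n <= m)%N) (hm : (m < 2 * n - k)%N)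
  (t1 t2 : btree (hpoly K))
  (h1 : bflat t1 = leaves (pmat chi g) n k m)
  (h2 : bflat t2 = leaves (pmat chi g) n k m) :
  ucongr (pmat chi g) n (beval (pmat chi g) t1).1 (beval (pmat chi g) t2).1.
Proof.
have hq1' : 1 + q != 0.
  move: hq1; apply: contra => /eqP h; by rewrite -subr_eq0 opprK addrC h.
have hk1 : (1 <= k)%N by case/andP: hk.
have [hg ho] := leaves_ok_good hq0 hq1' hpii hpadj hpfar hk1 hnm hm.
have [s [hv he]] := bracket_indep h1 h2 hg ho.
exists s; split => // w; by rewrite -he /fadd /fscale /C mulN1r.
Qed.
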